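(* Let $\omega\ge 2$ and let $\Gamma$ be a finite simple graph that is $\omega$-clique regular, with $m$ cliques of order $\omega$ (so $\Gamma$ has $N=m\binom{\omega}{2}$ edges). Let $\mu_1\le\cdots\le\mu_N$ be the eigenvalues of the adjacency matrix of the line graph $L(\Gamma)$. Then every eigenvalue $\lambda$ of the adjacency matrix of $C_\omega(\Gamma)$ satisfies \[\frac{\omega}{\omega-1}\left(\frac{\mu_1}{2}-\omega+2\right)\le\lambda\le\frac{\omega}{\omega-1}\left(\frac{\mu_N}{2}-\omega+2\right).\]
   Context: A graph is $\omega$-clique regular if it has a nonempty edge set and every edge is contained in exactly one clique of order $\omega$. $L(\Gamma)$ is the line graph (vertices = edges of $\Gamma$, adjacent iff sharing an endpoint). The $\omega$-clique graph $C_\omega(\Gamma)$ has as vertices the cliques of order $\omega$ in $\Gamma$, two distinct ones adjacent iff they have nonempty intersection. *)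

(* Defs.v *)
From mathcomp Require Import all_boot all_order all_algebra.
From mathcomp Require Import reals.
Set Implicit Arguments. Unset Strict Implicit. Unset Printing Implicit Defensive.
Import Order.TTheory GRing.Theory Num.Theory.
Local Open Scope ring_scope.

Definition simple_graph (T : finType) (e : rel T) : Prop :=
  symmetric e /\ irreflexive e.

Definition is_clique (T : finType) (e : rel T) (K : {set T}) : bool :=
  [forall x in K, forall y in K, (x != y) ==> e x y].

Definition is_wclique (T : finType) (e : rel T) (w : nat) (K : {set T}) : bool :=
  is_clique e K && (#|K| == w).

Definition wclique_regular (T : finType) (e : rel T) (w : nat) : Prop :=
  (exists x y, e x y) /\
  forall x y, e x y ->
    exists! K : {set T}, is_wclique e w K /\ x \in K /\ y \in K.

Definition is_edge (T : finType) (e : rel T) (E : {set T}) : bool :=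
  [exists x, exists y, e x y && (E == [set x; y])].

Definition edge_type (T : finType) (e : rel T) : finType :=
  {E : {set T} | is_edge e E}.

Definition line_adj (T : finType) (e : rel T) : rel (edge_type e) :=
  fun E F => (E != F) && (val E :&: val F != set0).

Definition wclique_type (T : finType) (e : rel T) (w : nat) : finType :=
  {K : {set T} | is_wclique e w K}.

Definition clique_adj (T : finType) (e : rel T) (w : nat) : rel (wclique_type e w) :=
  fun K L => (K != L) && (val K :&: val L != set0).

Definition adjmx (R : nzRingType) (V : finType) (adj : rel V) : 'M[R]_#|V| :=
  \matrix_(i, j) (adj (enum_val i) (enum_val j))%:R.

(* Main.v *)
Require Import Defs.
From mathcomp Require Import all_boot all_order all_algebra.
From mathcomp Require Import reals.
From mathcomp Require Import complex spectral sesquilinear.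
From mathcomp Require Import ring.
Import Order.TTheory GRing.Theory Num.Theory.
Local Open Scope ring_scope.
Section Spec.
Import Num.Def.
Local Open Scope sesquilinear_scope.
Variable R : realType.
Local Notation C := R[i].
Local Notation f := (real_complex R).

Lemma spectral_decomp n (A : 'M[R]_n) (sA : A^T = A) (y : 'rV[R]_n) :
  exists a c : 'I_n -> R, [/\ forall k, eigenvalue A (a k), forall k, 0 <= c k,
   (y *m A *m y^T) 0 0 = \sum_k a k * c k & (y *m y^T) 0 0 = \sum_k c k].
Proof.
pose Ac := map_mx f A.
have Aher : Ac \is hermsymmx.
  apply/is_hermitianmxP; rewrite expr0 scale1r.
  apply/matrixP => i j; rewrite !mxE /=.
  have := congr1 (fun M : 'M[R]_n => M j i) sA; rewrite !mxE => ->.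
  by rewrite conj_Creal //; apply/complex_realP; eexists.
pose P := spectralmx Ac; pose d := spectral_diag Ac.
have Pu : P \is unitarymx := spectral_unitarymx Ac.
have AcE : Ac = invmx P *m diag_mx d *m P.
  by apply/orthomx_spectralP/hermitian_normalmx.
have dreal := hermitian_spectral_diag_real Aher.
have Punit : P \in unitmx := unitarymx_unit Pu.
have realc : forall m k (M : 'M[R]_(m, k)), (map_mx f M) ^ conjC = map_mx f M.
  move=> m k M; apply/matrixP => i j; rewrite !mxE.
  by rewrite conj_Creal //; apply/complex_realP; eexists.
pose yc := map_mx f y.
pose z := yc *m P ^t conjC.
have ztE : z ^t conjC = P *m yc ^t conjC.
  by rewrite /z trmx_mul map_mxM trmxCK.
have E1 : f ((y *m A *m y^T) 0 0) = (z *m diag_mx d *m z ^t conjC) 0 0.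
  have -> : f ((y *m A *m y^T) 0 0) = (map_mx f (y *m A *m y^T)) 0 0 by rewrite [in RHS]mxE.
  rewrite ztE !map_mxM map_trmx -/yc -/Ac AcE invmx_unitary //.
  by rewrite /z !mulmxA -map_trmx realc.
have E2 : f ((y *m y^T) 0 0) = (z *m z ^t conjC) 0 0.
  have -> : f ((y *m y^T) 0 0) = (map_mx f (y *m y^T)) 0 0 by rewrite [in RHS]mxE.
  rewrite ztE !map_mxM map_trmx -/yc.
  by rewrite /z mulmxA mulmxKtV // realc.
pose a k := complex.Re (d 0 k).
pose c k := complex.Re (z 0 k * (z 0 k)^*).
have aE k : f (a k) = d 0 k.
  by apply: RRe_real; move/mxOverP: dreal; apply.
have cge0 k : 0 <= z 0 k * (z 0 k)^* by apply: mul_conjC_ge0.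
have cE k : f (c k) = z 0 k * (z 0 k)^*.
  by apply: RRe_real; apply: ger0_real.
exists a, c; split.
- move=> k; rewrite -(eigenvalue_map f).
  suff H : eigenvalue Ac (d 0 k) by move: H; rewrite -aE.
  apply/eigenvalueP; exists (delta_mx 0 k *m P).
    by rewrite -/Ac AcE !mulmxA mulmxK // -!rowE row_diag_mx -scalemxAl rowE.
  apply/negP => /eqP h; have := congr1 (fun M => M *m invmx P) h.
  rewrite mulmxK // mul0mx => /matrixP /(_ 0 k); rewrite !mxE !eqxx /=.
  by move/eqP; rewrite oner_eq0.
- by move=> k; rewrite -lecR cE.
- apply: complexI; rewrite E1 rmorph_sum /= mxE; apply: eq_bigr => k _.
  rewrite mul_mx_diag !mxE rmorphM /= aE cE. rewrite /z !mxE; ring.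
- apply: complexI; rewrite E2 rmorph_sum /= mxE; apply: eq_bigr => k _.
  by rewrite cE !mxE.
Qed.
End Spec.


Lemma rayleigh_bounds (R : realType) n (A : 'M[R]_n) (sA : A^T = A) (m1 mN : R)
  (h1 : forall mu, eigenvalue A mu -> m1 <= mu)
  (hN : forall mu, eigenvalue A mu -> mu <= mN) (y : 'rV_n) :
  m1 * (y *m y^T) 0 0 <= (y *m A *m y^T) 0 0 /\
  (y *m A *m y^T) 0 0 <= mN * (y *m y^T) 0 0.
Proof.
have [a [c [ha hc -> ->]]] := @spectral_decomp R n A sA y.
rewrite !mulr_sumr; split; apply: ler_sum => k _; apply: ler_wpM2r => //.
  exact: h1.
exact: hN.
Qed.

Lemma reidx (R : nzRingType) (V : finType) (F : V -> R) :
  \sum_(i < #|V|) F (enum_val i) = \sum_(x : V) F x.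
Proof.
rewrite [RHS](reindex (@enum_val V (mem V))) //=; apply: onW_bij; apply: enum_val_bij.
Qed.

Lemma quad_adj (R : realType) (V : finType) (adj : rel V) (Y : V -> R) :
  ((\row_i Y (enum_val i)) *m adjmx R adj *m (\row_i Y (enum_val i))^T) 0 0
  = \sum_a \sum_b Y a * (adj a b)%:R * Y b.
Proof.
rewrite mxE; under eq_bigr do rewrite !mxE mulr_suml.
rewrite exchange_big /= -[RHS]reidx; apply: eq_bigr => i _.
rewrite -[RHS]reidx; apply: eq_bigr => j _.
by rewrite /adjmx !mxE.
Qed.

Lemma norm_row (R : realType) (V : finType) (Y : V -> R) :
  ((\row_(i < #|V|) Y (enum_val i)) *m (\row_(i < #|V|) Y (enum_val i))^T) 0 0 = \sum_a Y a ^+ 2.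
Proof.
rewrite mxE -[RHS]reidx; apply: eq_bigr => i _; by rewrite !mxE expr2.
Qed.

Lemma adjmx_sym (R : realType) (V : finType) (adj : rel V) :
  symmetric adj -> (adjmx R adj)^T = adjmx R adj.
Proof. by move=> hs; apply/matrixP => i j; rewrite /adjmx !mxE hs. Qed.

Lemma sum_ind (R : realType) (V : finType) (P : pred V) :
  \sum_(x : V) ((P x)%:R : R) = #|[set x | P x]|%:R.
Proof.
rewrite -sum1_card natr_sum [RHS]big_mkcond /=; apply: eq_bigr => x _.
by rewrite inE; case: (P x).
Qed.

Lemma sqr_sum (R : realType) (I : finType) (a : I -> R) :
  (\sum_i a i) ^+ 2 = \sum_i \sum_j a i * a j.
Proof. by rewrite expr2 mulr_suml; apply: eq_bigr => i _; rewrite mulr_sumr. Qed.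

Lemma sum_pick (R : realType) (I : finType) (i0 : I) (f : I -> R) :
  \sum_i (i == i0)%:R * f i = f i0.
Proof.
rewrite (bigD1 i0) //= eqxx mul1r big1 ?addr0 // => i /negbTE ->.
by rewrite mul0r.
Qed.

Section Comb.
Variables (R : realType) (T : finType) (e : rel T) (w : nat).
Hypotheses (hw : (2 <= w)%N) (hG : simple_graph e) (hreg : wclique_regular e w).
Local Notation Et := (edge_type e).
Local Notation Kt := (wclique_type e w).

Lemma edgeP (E : Et) : exists x y, [/\ e x y, x != y & val E = [set x; y]].
Proof.
case: E => S /= /existsP [x /existsP [y /andP [exy /eqP ->]]].
exists x, y; split=> //.
by apply: contraTneq exy => ->; rewrite hG.2.
Qed.

Lemma edge_card (E : Et) : #|val E| = 2%N.
Proof. by have [x [y [_ nxy ->]]] := edgeP E; rewrite cards2 nxy. Qed.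

Lemma clique_edge {K : Kt} {x y} :
  x \in val K -> y \in val K -> x != y -> e x y.
Proof.
case: K => K /= /andP [/forallP hK _] xK yK nxy.
move: (hK x) => /implyP/(_ xK)/forallP/(_ y)/implyP/(_ yK)/implyP/(_ nxy).
done.
Qed.

Lemma clique_card (K : Kt) : #|val K| = w.
Proof. by case: K => K /= /andP [_ /eqP]. Qed.

Lemma two_in_unique (K K' : Kt) x y : x \in val K -> y \in val K ->
  x \in val K' -> y \in val K' -> x != y -> K = K'.
Proof.
move=> xK yK xK' yK' nxy; have exy := clique_edge xK yK nxy.
have [K0 [_ uK0]] := hreg.2 x y exy.
apply: val_inj; rewrite -(uK0 (val K)) ?(uK0 (val K')) //; split=> //; exact: valP.
Qed.

Lemma cliq_unique (E : Et) :
  exists K0 : Kt, forall K : Kt, (val E \subset val K) = (K == K0).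
Proof.
have [x [y [exy nxy hE]]] := edgeP E.
have [K0 [[hK0 [xK0 yK0]] uK0]] := hreg.2 x y exy.
exists (exist _ K0 hK0) => K; rewrite hE subUset !sub1set.
apply/andP/eqP => [[xK yK]|->]; last by rewrite /= xK0 yK0.
by apply: val_inj => /=; apply/esym/uK0; split=> //; exact: valP.
Qed.

Lemma F2 (K : Kt) v : \sum_(E : Et) ((v \in val E)%:R * (val E \subset val K)%:R : R)
  = (w%:R - 1) * (v \in val K)%:R.
Proof.
under eq_bigr do rewrite -natrM mulnb.
rewrite sum_ind; case vK: (v \in val K); last first.
  rewrite mulr0; apply/eqP; rewrite pnatr_eq0 cards_eq0; apply/eqP/setP => E.
  rewrite !inE; apply/negbTE/negP => /andP [vE sEK].
  by rewrite (subsetP sEK _ vE) in vK.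
rewrite mulr1 -(card_imset _ val_inj).
have -> : [set val x | x in [set E : Et | (v \in val E) && (val E \subset val K)]]
   = (fun u => [set v; u]) @: (val K :\ v).
  apply/setP => S; apply/imsetP/imsetP.
    move=> [E]; rewrite inE => /andP [vE sEK] ->.
    have [x [y [exy nxy hE]]] := edgeP E.
    move: vE sEK; rewrite hE !inE subUset !sub1set => /orP [] /eqP -> /andP [xK yK].
      by exists y; rewrite // !inE eq_sym nxy.
    by exists x; [rewrite !inE nxy | rewrite setUC].
  move=> [u]; rewrite !inE => /andP [nuv uK] ->.
  have evu : e v u.
    by apply: (clique_edge (K:=K)); rewrite // eq_sym.
  have hE : is_edge e [set v; u].
    by apply/existsP; exists v; apply/existsP; exists u; rewrite evu eqxx.
  exists (exist _ [set v; u] hE) => //.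
  by rewrite inE /= set21 subUset !sub1set vK uK.
rewrite card_in_imset.
  have hc := clique_card K; rewrite (cardsD1 v) vK in hc.
  by rewrite -[in RHS]hc natrD addrAC (_ : true%:R = 1 :> R) ?subrr ?add0r.
move=> u1 u2; rewrite !inE => /andP [n1 _] /andP [n2 _] heq.
have : u1 \in [set v; u2] by rewrite -heq set22.
by rewrite !inE (negbTE n1) => /eqP.
Qed.

Lemma sum_set_ind (A : {set T}) : \sum_v ((v \in A)%:R : R) = #|A|%:R.
Proof.
rewrite sum_ind; have -> : [set x | x \in A] = A by apply/setP => v; rewrite inE.
by [].
Qed.

Lemma edges_in_K (K : Kt) :
  (\sum_(E : Et) ((val E \subset val K)%:R : R)) * 2 = w%:R * (w%:R - 1).
Proof.
rewrite mulr_suml.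
have h2 : forall E : Et, 2 = \sum_v ((v \in val E)%:R : R).
  by move=> E; rewrite sum_set_ind edge_card.
under eq_bigr => E _ do rewrite [X in _ * X](h2 E) mulr_sumr.
rewrite exchange_big /=.
under eq_bigr => v _ do (under eq_bigr do rewrite mulrC; rewrite F2).
by rewrite -mulr_sumr sum_set_ind clique_card mulrC.
Qed.

Lemma F4 (K K' : Kt) : \sum_v ((v \in val K)%:R * (v \in val K')%:R : R)
  = w%:R * (K == K')%:R + (clique_adj K K')%:R.
Proof.
under eq_bigr do rewrite -natrM mulnb.
rewrite sum_ind.
have -> : [set v | (v \in val K) && (v \in val K')] = val K :&: val K'.
  by apply/setP => v; rewrite !inE.
rewrite /clique_adj; case: eqP => [->|neq].
  by rewrite setIid clique_card /= (_ : true%:R = 1 :> R) ?mulr1 ?addr0.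
rewrite mulr0 add0r /=.
have h1 : (#|val K :&: val K'| <= 1)%N.
  rewrite leqNgt; apply/negP => /card_gt1P [x [y [hx hy nxy]]].
  rewrite !inE in hx hy; case/andP: hx => xK xK'; case/andP: hy => yK yK'.
  by apply: neq; exact: (@two_in_unique K K' x y xK yK xK' yK' nxy).
rewrite -card_gt0; case: #|_| h1 => [|[|]] //.
Qed.

Lemma edge_inter (E F : Et) : ((line_adj E F)%:R : R)
  = \sum_v ((v \in val E)%:R * (v \in val F)%:R) - 2 * (E == F)%:R.
Proof.
under eq_bigr do rewrite -natrM mulnb.
rewrite sum_ind.
have -> : [set v | (v \in val E) && (v \in val F)] = val E :&: val F.
  by apply/setP => v; rewrite !inE.
rewrite /line_adj; case: eqP => [->|neq].
  by rewrite setIid edge_card /= (_ : true%:R = 1 :> R) ?mulr1 ?subrr.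
rewrite mulr0 subr0 /=.
have h1 : (#|val E :&: val F| <= 1)%N.
  rewrite leqNgt; apply/negP => h; apply: neq; apply: val_inj.
  have h2 : (2 <= #|val E :&: val F|)%N by [].
  have eE : val E :&: val F = val E.
    by apply/eqP; rewrite eqEcard subsetIl edge_card.
  have eF : val E :&: val F = val F.
    by apply/eqP; rewrite eqEcard subsetIr edge_card.
  by rewrite -eE; rewrite {1}eF.
rewrite -card_gt0; case: #|_| h1 => [|[|]] //.
Qed.

Lemma sumsq (E : Et) (X : Kt -> R) :
  (\sum_(K : Kt) (val E \subset val K)%:R * X K) ^+ 2 = \sum_(K : Kt) (val E \subset val K)%:R * X K ^+ 2.
Proof.
have [K0 hK0] := cliq_unique E.
under eq_bigr do rewrite hK0. under [RHS]eq_bigr do rewrite hK0.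
by rewrite !sum_pick.
Qed.

Definition Yf (X : Kt -> R) (E : Et) := \sum_(K : Kt) (val E \subset val K)%:R * X K.
Arguments Yf : simpl never.

Lemma normY X : (\sum_(E : Et) (Yf X E) ^+ 2) * 2 = w%:R * (w%:R - 1) * \sum_(K : Kt) X K ^+ 2.
Proof.
rewrite /Yf; under eq_bigr do rewrite sumsq.
rewrite exchange_big /= mulr_suml mulr_sumr; apply: eq_bigr => K _.
by rewrite -mulr_suml -(edges_in_K K); ring.
Qed.

Lemma B1 X (E : Et) : \sum_(F : Et) Yf X E * (E == F)%:R * Yf X F = Yf X E ^+ 2.
Proof.
rewrite (eq_bigr (fun F => (F == E)%:R * (Yf X E * Yf X F))).
  by rewrite sum_pick expr2.
by move=> F _; rewrite eq_sym; ring.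
Qed.

Lemma B3 X v : \sum_(E : Et) (v \in val E)%:R * Yf X E
   = (w%:R - 1) * \sum_(K : Kt) (v \in val K)%:R * X K.
Proof.
rewrite /Yf; under eq_bigr do rewrite mulr_sumr.
rewrite exchange_big /= mulr_sumr; apply: eq_bigr => K _.
under eq_bigr do rewrite mulrA.
rewrite -mulr_suml.
by have := F2 K v; rewrite /= => ->; rewrite mulrA.
Qed.

Lemma B2 X : \sum_(E : Et) \sum_(F : Et) Yf X E * (\sum_v (v \in val E)%:R * (v \in val F)%:R) * Yf X F
  = \sum_v (\sum_(E : Et) (v \in val E)%:R * Yf X E) ^+ 2.
Proof.
under [RHS]eq_bigr do rewrite sqr_sum.
rewrite [RHS]exchange_big /=; apply: eq_bigr => E _.
rewrite [RHS]exchange_big /=; apply: eq_bigr => F _.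
move: (Yf X E) (Yf X F) => a b.
by rewrite mulr_sumr mulr_suml; apply: eq_bigr => v _; ring.
Qed.

Lemma B4 (X : Kt -> R) : \sum_(v : T) (\sum_(K : Kt) (v \in val K)%:R * X K) ^+ 2
  = w%:R * \sum_(K : Kt) X K ^+ 2 + \sum_(K : Kt) \sum_(K' : Kt) X K * (clique_adj K K')%:R * X K'.
Proof.
under eq_bigr do rewrite sqr_sum.
rewrite exchange_big /= mulr_sumr -big_split /=; apply: eq_bigr => K _.
rewrite exchange_big /=.
rewrite (eq_bigr (fun K' => (K' == K)%:R * (w%:R * (X K * X K'))
                             + X K * (clique_adj K K')%:R * X K')).
  rewrite big_split /= sum_pick expr2 mulrA //.
move=> K' _; have := F4 K K'; rewrite /= => h.
rewrite (eq_bigr (fun v => X K * X K' * ((v \in sval K)%:R * (v \in sval K')%:R))); last by move=> v _; ring.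
by rewrite -mulr_sumr h eq_sym; ring.
Qed.

Lemma quadY X : \sum_(E : Et) \sum_(F : Et) Yf X E * (line_adj E F)%:R * Yf X F
  = (w%:R - 1) ^+ 2 * (w%:R * \sum_(K : Kt) X K ^+ 2
      + \sum_(K : Kt) \sum_(K' : Kt) X K * (clique_adj K K')%:R * X K')
    - 2 * \sum_(E : Et) (Yf X E) ^+ 2.
Proof.
under eq_bigr => E _ do under eq_bigr => F _ do rewrite edge_inter.
have -> : \sum_(E : Et) \sum_(F : Et) Yf X E *
   (\sum_v (v \in val E)%:R * (v \in val F)%:R - 2 * (E == F)%:R) * Yf X F
  = \sum_(E : Et) \sum_(F : Et) Yf X E * (\sum_v (v \in val E)%:R * (v \in val F)%:R) * Yf X F
    - 2 * \sum_(E : Et) \sum_(F : Et) Yf X E * (E == F)%:R * Yf X F.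
  rewrite mulr_sumr -sumrB; apply: eq_bigr => E _.
  by rewrite mulr_sumr -sumrB; apply: eq_bigr => F _; ring.
rewrite B2; under eq_bigr do rewrite B3.
under [X in _ - 2 * X = _]eq_bigr do rewrite B1.
congr (_ - _); rewrite -B4 mulr_sumr; apply: eq_bigr => v _.
by rewrite exprMn.
Qed.
End Comb.

Theorem theorem7 (R : realType) (T : finType) (e : rel T) (w : nat)
  (hw : (2 <= w)%N) (hG : simple_graph e) (hreg : wclique_regular e w)
  (mu1 muN : R)
  (hmu1 : eigenvalue (adjmx R (@line_adj T e)) mu1)
  (hmu1min : forall mu, eigenvalue (adjmx R (@line_adj T e)) mu -> mu1 <= mu)
  (hmuN : eigenvalue (adjmx R (@line_adj T e)) muN)
  (hmuNmax : forall mu, eigenvalue (adjmx R (@line_adj T e)) mu -> mu <= muN)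
  (lam : R) (hlam : eigenvalue (adjmx R (@clique_adj T e w)) lam) :
  (w%:R / (w%:R - 1)) * (mu1 / 2 - w%:R + 2) <= lam /\
  lam <= (w%:R / (w%:R - 1)) * (muN / 2 - w%:R + 2).
Proof.
have [v hv vn0] := eigenvalueP hlam.
pose X := fun K : wclique_type e w => v 0 (enum_rank K).
have vE : v = \row_(i < #|wclique_type e w|) X (enum_val i).
  by apply/rowP => i; rewrite !mxE /X enum_valK.
pose S := \sum_(K : wclique_type e w) X K ^+ 2.
have hQ : \sum_(K : wclique_type e w) \sum_(K' : wclique_type e w)
    X K * (clique_adj K K')%:R * X K' = lam * S.
  rewrite -quad_adj -vE hv -scalemxAl mxE vE norm_row.
  by rewrite /S; congr (_ * _); apply: eq_bigr => K _; rewrite !mxE.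
have Spos : 0 < S.
  rewrite lt_def sumr_ge0 ?andbT => [|K _]; last exact: sqr_ge0.
  apply/negP => /eqP h0; move/negP: vn0; apply; apply/eqP/rowP => i.
  have h := psumr_eq0P (fun K _ => sqr_ge0 (X K)) h0.
  have := h (enum_val i) isT; rewrite /X enum_valK => /eqP; rewrite sqrf_eq0 => /eqP ->.
  by rewrite mxE.
pose y := \row_(i < #|edge_type e|) Yf R T e w X (enum_val i).
have sL : symmetric (@line_adj T e).
  by move=> E F; rewrite /line_adj eq_sym setIC.
have [hb1 hbN] := @rayleigh_bounds R _ _ (@adjmx_sym R _ _ sL) _ _ hmu1min hmuNmax y.
rewrite /y quad_adj norm_row quadY // hQ in hb1 hbN.
have hN := @normY R T e w hG hreg X; rewrite -/S in hN.
set NY := \sum_(E : edge_type e) Yf R T e w X E ^+ 2 in hb1 hbN hN.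
set W := (w%:R : R) in hb1 hbN hN *.
have hW : 1 < W by rewrite /W ltr1n.
have hW1 : 0 < W - 1 by rewrite subr_gt0.
have hWS : 0 < (W - 1) * S by apply: mulr_gt0.
have NYE : NY = W * (W - 1) * S / 2.
  by rewrite -hN mulfK // pnatr_eq0.
split.
- rewrite mulrAC ler_pdivrMr //.
  rewrite -(ler_pM2l hWS) -subr_le0.
  have -> : (W - 1) * S * (W * (mu1 / 2 - W + 2)) - (W - 1) * S * (lam * (W - 1))
      = mu1 * NY - ((W - 1) ^+ 2 * (W * S + lam * S) - 2 * NY).
    by rewrite NYE; field.
  by rewrite subr_le0.
- rewrite mulrAC ler_pdivlMr //.
  rewrite -(ler_pM2l hWS) -subr_le0.
  have -> : (W - 1) * S * (lam * (W - 1)) - (W - 1) * S * (W * (muN / 2 - W + 2))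
      = ((W - 1) ^+ 2 * (W * S + lam * S) - 2 * NY) - muN * NY.
    by rewrite NYE; field.
  by rewrite subr_le0.
Qed.
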